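(* If a connected graph $G$ has a GS ordering whose $\mathcal{F}$-tree has at most $k$ leaves, then the pathwidth of $G$ is at most $k$. Moreover, this bound is tight: for every $k\ge 1$ there is a graph (e.g. the complete graph $K_{k+1}$) that has a GS ordering whose $\mathcal{F}$-tree has exactly $k$ leaves and whose pathwidth equals $k$.
   Context: All graphs are finite, simple, undirected, connected and non-empty. A GS ordering of $G$ is an ordering $(v_1,\dots,v_n)$ of $V(G)$ such that every $v_i$ with $i>1$ has a neighbor among $v_1,\dots,v_{i-1}$. Its $\mathcal{F}$-tree is the spanning tree rooted at $v_1$ in which the parent of $v_i$ ($i>1$) is its leftmost neighbor in the ordering. A leaf is a non-root vertex without children (the root is never a leaf). *)

(* Defs.v *)
From mathcomp Require Import all_boot.
Set Implicit Arguments. Unset Strict Implicit. Unset Printing Implicit Defensive.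

Definition simple_graph (T : finType) (e : rel T) : Prop :=
  symmetric e /\ irreflexive e.

Definition connected_graph (T : finType) (e : rel T) : Prop :=
  0 < #|T| /\ forall x y : T, connect e x y.

(* An ordering (v_1,...,v_n) of V(G) is a duplicate-free sequence containing
   every vertex; the position of x is [index x s] (0-based). *)
Definition vertex_ordering (T : finType) (s : seq T) : Prop :=
  uniq s /\ forall x : T, x \in s.

Definition GS_ordering (T : finType) (e : rel T) (s : seq T) : Prop :=
  vertex_ordering s /\
  forall x : T, 0 < index x s -> exists2 y : T, e y x & index y s < index x s.

Definition Ftree_parent (T : finType) (e : rel T) (s : seq T) (u v : T) : bool :=
  [&& 0 < index v s, e u v & [forall w, e w v ==> (index u s <= index w s)]].

Definition Ftree_leaf (T : finType) (e : rel T) (s : seq T) (x : T) : bool :=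
  (0 < index x s) && ~~ [exists y, Ftree_parent e s x y].

Definition Ftree_leaves (T : finType) (e : rel T) (s : seq T) : {set T} :=
  [set x | Ftree_leaf e s x].

Definition path_decomposition (T : finType) (e : rel T) (bs : seq {set T}) : Prop :=
  [/\ forall x : T, exists2 B, B \in bs & x \in B,
      forall x y : T, e x y -> exists2 B, B \in bs & (x \in B) && (y \in B)
    & forall (x : T) (i j l : nat), i <= j -> j <= l -> l < size bs ->
        x \in nth set0 bs i -> x \in nth set0 bs l -> x \in nth set0 bs j].

(* width of a decomposition = (max bag size) - 1; pathwidth <= k iff some
   path decomposition has all bags of size at most k+1. *)
Definition pathwidth_le (T : finType) (e : rel T) (k : nat) : Prop :=
  exists2 bs : seq {set T}, path_decomposition e bs & forall B : {set T}, B \in bs -> #|B| <= k.+1.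

Definition pathwidth_eq (T : finType) (e : rel T) (k : nat) : Prop :=
  pathwidth_le e k /\ (0 < k -> ~ pathwidth_le e k.-1).

(* Main.v *)
Require Import Defs.
From mathcomp Require Import all_boot zify.
Set Implicit Arguments. Unset Strict Implicit. Unset Printing Implicit Defensive.

Section P1.
Variables (T : finType) (e : rel T) (s : seq T).
Hypothesis esym : symmetric e.
Hypothesis eirr : irreflexive e.
Hypothesis suniq : uniq s.
Hypothesis sall : forall x, x \in s.
Hypothesis GS : forall x : T, 0 < index x s -> exists2 y : T, e y x & index y s < index x s.

Local Notation idx x := (index x s).
Definition pi (x : T) := minn (find (fun y => e y x) s) (idx x).
Definition par x := nth x s (pi x).

Lemma idx_lt x : idx x < size s. Proof. by rewrite index_mem. Qed.
Lemma pi_le x : pi x <= idx x. Proof. exact: geq_minr. Qed.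
Lemma idx_nth x0 i : i < size s -> idx (nth x0 s i) = i.
Proof. by move=> h; rewrite index_uniq. Qed.
Lemma idx_par x : idx (par x) = pi x.
Proof. by rewrite /par idx_nth // (leq_ltn_trans (pi_le x) (idx_lt x)). Qed.
Lemma idx_inj x y : idx x = idx y -> x = y.
Proof. by move=> h; rewrite -[x](nth_index x (sall x)) h (nth_index _ (sall y)). Qed.

Lemma find_le x u : e u x -> find (fun y => e y x) s <= idx u.
Proof.
move=> h; rewrite leqNgt; apply/negP => lt.
by have := before_find u lt; rewrite /= nth_index ?h.
Qed.

Lemma pi_edge u x : e u x -> pi x <= idx u.
Proof. by move=> h; exact: leq_trans (geq_minl _ _) (find_le h). Qed.

Lemma nonroot x : 0 < idx x -> pi x < idx x /\ e (par x) x.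
Proof.
move=> h0; have [y eyx lt] := GS h0.
have fl := find_le eyx.
have hpi : pi x = find (fun y => e y x) s.
  by rewrite /pi; apply/minn_idPl; apply: ltnW; exact: leq_ltn_trans fl lt.
split; first by rewrite hpi; exact: leq_ltn_trans fl lt.
rewrite /par hpi; apply: (@nth_find _ x (fun y => e y x)).
by apply/hasP; exists y.
Qed.

Lemma par_unique u x : Ftree_parent e s u x -> par x = u.
Proof.
move/and3P => [h0 hux /forallP hw]; have [lt epx] := nonroot h0.
apply: idx_inj; rewrite idx_par; apply/eqP; rewrite eqn_leq pi_edge //=.
by have := hw (par x); rewrite epx /= idx_par.
Qed.

Lemma idx_iter_par m x : idx (iter m par x) <= idx x.
Proof.
elim: m => // m IH; rewrite iterS idx_par; exact: leq_trans (pi_le _) IH.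
Qed.

Lemma leaf_below u : 0 < idx u ->
  exists2 l, Ftree_leaf e s l & exists2 m, m <= idx l - idx u & iter m par l = u.
Proof.
move=> hu.
suff H : forall N v, 0 < idx v -> size s - idx v <= N ->
  exists2 l, Ftree_leaf e s l & exists2 m, m <= idx l - idx v & iter m par l = v.
  by apply: (H (size s)) => //; apply: leq_subr.
elim => [|N IH] v hv hn.
  by have := idx_lt v; lia.
case: (boolP [exists y, Ftree_parent e s v y]).
  move/existsP => [y hy]; have py := par_unique hy.
  have hy0 : 0 < idx y by case/and3P: hy.
  have lt : idx v < idx y by rewrite -py idx_par; case: (nonroot hy0).
  have [|l hl [m hm hit]] := IH y hy0; first by have := idx_lt y; lia.
  have := idx_iter_par m l; rewrite hit => hyl.
  exists l => //; exists m.+1; first by lia.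
  by rewrite iterS hit.
move=> hno; exists v; first by rewrite /Ftree_leaf hv hno.
by exists 0.
Qed.

Definition below u l := [exists m : 'I_(size s), iter m par l == u].
Definition fl u := odflt u [pick l | Ftree_leaf e s l && below u l].

Lemma flP u : 0 < idx u -> Ftree_leaf e s (fl u) && below u (fl u).
Proof.
move=> hu; rewrite /fl; case: pickP => [l -> //|none].
have [l hl [m hm hit]] := leaf_below hu.
have mlt : m < size s by have := idx_lt l; lia.
have := none l; rewrite hl /=.
have -> : below u l by apply/existsP; exists (Ordinal mlt); exact/eqP.
done.
Qed.

Definition Y a := [set u | pi u <= a < idx u].

Lemma anc_Y a u1 u2 m : u1 \in Y a -> u2 \in Y a -> iter m par u1 = u2 -> u1 = u2.
Proof.
rewrite !inE => /andP[h1 h1'] /andP[h2 h2']; case: m => [//|d].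
rewrite iterSr => h.
have := idx_iter_par d (par u1); rewrite h idx_par; lia.
Qed.

Lemma Y_card a k : #|Ftree_leaves e s| <= k -> #|Y a| <= k.
Proof.
move=> hk; apply: leq_trans hk.
have inj : {in Y a &, injective fl}.
  move=> u1 u2 hu1 hu2 heq.
  have p1 : 0 < idx u1 by move: hu1; rewrite inE; lia.
  have p2 : 0 < idx u2 by move: hu2; rewrite inE; lia.
  have /andP[_ /existsP[m1 /eqP b1]] := flP p1.
  have /andP[_ /existsP[m2 /eqP b2]] := flP p2.
  rewrite heq in b1.
  case: (leqP m1 m2) => hm.
    apply: (anc_Y (a := a) (m := m2 - m1)) => //.
    by rewrite -b1 -iterD subnK.
  symmetry; apply: (anc_Y (a := a) (m := m1 - m2)) => //.
  by rewrite -b2 -iterD subnK // ltnW.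
rewrite -(card_in_imset inj); apply: subset_leq_card.
apply/subsetP => _ /imsetP[u hu ->].
have p : 0 < idx u by move: hu; rewrite inE; lia.
by rewrite inE; case/andP: (flP p).
Qed.

Definition B a := [set u | pi u <= a <= idx u].
Definition bs := [seq B a | a <- iota 0 (size s)].

Lemma nth_bs i : i < size s -> nth set0 bs i = B i.
Proof. by move=> h; rewrite (nth_map 0) ?size_iota // nth_iota. Qed.

Lemma size_bs : size bs = size s.
Proof. by rewrite size_map size_iota. Qed.

Lemma B_card a k : #|Ftree_leaves e s| <= k -> #|B a| <= k.+1.
Proof.
move=> hk.
have sub : B a \subset Y a :|: [set u | idx u == a].
  apply/subsetP => u; rewrite !inE => /andP[h1 h2].
  case: (ltnP a (idx u)) => h3; apply/orP; [left; apply/andP|right; apply/eqP]; lia.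
apply: leq_trans (subset_leq_card sub) _.
rewrite cardsU; apply: leq_trans (leq_subr _ _) _.
rewrite -addn1; apply: leq_add; first exact: Y_card.
apply/card_le1_eqP => x y; rewrite !inE => /eqP hx /eqP hy.
by apply: idx_inj; rewrite hx hy.
Qed.

Lemma part1 k : #|Ftree_leaves e s| <= k -> pathwidth_le e k.
Proof.
move=> hk; exists bs; last first.
  by move=> _ /mapP[a _ ->]; exact: B_card.
split.
- move=> x; exists (B (idx x)); first by apply: map_f; rewrite mem_iota /= idx_lt.
  by rewrite inE pi_le leqnn.
- move=> x y exy.
  case: (ltngtP (idx x) (idx y)) => h.
  + exists (B (idx x)); first by apply: map_f; rewrite mem_iota /= idx_lt.
    by rewrite !inE pi_le leqnn (pi_edge exy) ltnW.
  + exists (B (idx y)); first by apply: map_f; rewrite mem_iota /= idx_lt.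
    by rewrite !inE pi_le leqnn (ltnW h) (pi_edge (u:=y) (x:=x)) // esym.
  + by move: exy; rewrite (idx_inj h) eirr.
- move=> x i j l hij hjl hl; rewrite size_bs in hl.
  rewrite !nth_bs //; try lia.
  rewrite !inE; lia.
Qed.
End P1.

Lemma helly (T : finType) (e : rel T) (x0 : T) (bs : seq {set T}) :
  (forall x y, x != y -> e x y) -> path_decomposition e bs ->
  exists2 B, B \in bs & forall x, x \in B.
Proof.
move=> comp [cov edg con].
pose l x := find (fun B : {set T} => x \in B) bs.
have hl x : l x < size bs /\ x \in nth set0 bs (l x).
  have [B hB xB] := cov x.
  have hh : has (fun B : {set T} => x \in B) bs by apply/hasP; exists B.
  by split; [rewrite -has_find | exact: (nth_find set0 hh)].
have hmin x j : x \in nth set0 bs j -> l x <= j.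
  move=> hj; rewrite leqNgt; apply/negP => lt.
  by have := before_find set0 lt; rewrite /= hj.
case: (@arg_maxnP T x0 predT l) => // xs _ hmax.
exists (nth set0 bs (l xs)); first by apply: mem_nth; case: (hl xs).
move=> y; case: (eqVneq y xs) => [->|ne]; first by case: (hl xs).
have [B' hB' /andP[yB xB]] := edg _ _ (comp _ _ ne).
have hj : nth set0 bs (index B' bs) = B' by rewrite nth_index.
apply: (con y (l y) _ (index B' bs)).
- exact: hmax.
- by apply: hmin; rewrite hj.
- by rewrite index_mem.
- by case: (hl y).
- by rewrite hj.
Qed.

Section P2.
Variable k : nat.
Definition Ke : rel 'I_k.+1 := fun x y => x != y.
Definition Ks := enum 'I_k.+1.

Lemma K_simple : simple_graph Ke.
Proof. by split; [move=> x y; rewrite /Ke eq_sym | move=> x; rewrite /Ke eqxx]. Qed.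

Lemma K_conn : connected_graph Ke.
Proof.
split; first by rewrite card_ord.
move=> x y; case: (eqVneq x y) => [->|ne]; first exact: connect0.
by apply: connect1.
Qed.

Lemma K_GS : GS_ordering Ke Ks.
Proof.
split; first by split; [exact: enum_uniq | move=> x; rewrite mem_enum].
move=> x; rewrite /Ks index_enum_ord => hx.
exists ord0; last by rewrite index_enum_ord.
by rewrite /Ke; apply/eqP => h; move: hx; rewrite -h.
Qed.

Lemma K_leaves : Ftree_leaves Ke Ks = [set~ ord0].
Proof.
apply/setP => x; rewrite !inE /Ftree_leaf /Ks index_enum_ord.
case: (posnP x) => hx.
  by apply/esym/eqP; apply: val_inj.
have -> : x != ord0 by apply/eqP => h; move: hx; rewrite h.
rewrite /=; apply/negP => /existsP[y /and3P[hy _ /forallP hw]].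
have := hw ord0; rewrite /Ke.
have -> : ord0 != y by apply/eqP => h; move: hy; rewrite index_enum_ord -h.
rewrite /= !index_enum_ord /=; lia.
Qed.

Lemma K_nleaves : #|Ftree_leaves Ke Ks| = k.
Proof. by rewrite K_leaves cardsC1 card_ord. Qed.

Lemma K_pw : 0 < k -> pathwidth_eq Ke k.
Proof.
move=> hk; split.
  exists [:: setT]; last by move=> B; rewrite inE => /eqP ->; rewrite cardsT card_ord.
  split.
  - by move=> x; exists setT; rewrite ?inE.
  - by move=> x y _; exists setT; rewrite ?inE.
  - move=> x i j l hij hjl /= hl.
    have -> : j = 0 by lia.
    have -> : i = 0 by lia.
    done.
move=> _ [bs hd hsz].
have [B hB hall] := helly ord0 (fun x y (h : x != y) => h) hd.
have := hsz B hB.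
have -> : B = setT by apply/setP => x; rewrite inE hall.
rewrite cardsT card_ord; lia.
Qed.
End P2.

Theorem lemma3p8 :
  (forall (T : finType) (e : rel T) (s : seq T) (k : nat),
      simple_graph e -> connected_graph e -> GS_ordering e s ->
      #|Ftree_leaves e s| <= k -> pathwidth_le e k)
  /\
  (forall k : nat, 1 <= k ->
     exists (T : finType) (e : rel T) (s : seq T),
       [/\ simple_graph e, connected_graph e, GS_ordering e s,
           #|Ftree_leaves e s| = k & pathwidth_eq e k]).
Proof.
split.
  move=> T e s k [hs hi] _ [[hu ha] hg] hk.
  exact: (part1 hs hi hu ha hg hk).
move=> k hk; exists 'I_k.+1, (@Ke k), (@Ks k); split.
- exact: K_simple.
- exact: K_conn.
- exact: K_GS.
- exact: K_nleaves.
- exact: K_pw.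
Qed.
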